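(* Let $\mathbf B=(\mathbf b_1,\dots,\mathbf b_n)\in\mathbb Q^{d\times n}$ be a basis, $\gamma\ge2$, and $\mathbf B'=(\mathbf b_1',\dots,\mathbf b_n'):=A_{\mathbf B,\gamma}\mathbf B$. Then $\alpha_1\le\alpha_2\le\cdots\le\alpha_n$, and for every $i$, if $\alpha_i<\alpha_{i+1}$ then $\|\tilde{\mathbf b}_{i+1}'\|>(\gamma/2)\cdot\|\tilde{\mathbf b}_i'\|$.
   Context: Gram–Schmidt orthogonalization: $\tilde{\mathbf b}_1=\mathbf b_1$, $\tilde{\mathbf b}_i=\Pi_{\{\mathbf b_1,\dots,\mathbf b_{i-1}\}^\perp}(\mathbf b_i)$, where $\Pi_{S^\perp}$ is orthogonal projection onto the orthogonal complement of $\mathrm{span}(S)$; similarly $\tilde{\mathbf b}_i'$ for $\mathbf B'$. Define $\alpha_1=1$ and $\alpha_i=\max\{\alpha_{i-1},\lceil \|\tilde{\mathbf b}_i\|/(\gamma^i\|\mathbf b_1\|)\rceil\}$ for $i\ge2$. $A_{\mathbf B,\gamma}\in\mathbb R^{d\times d}$ is the unique linear map with $A_{\mathbf B,\gamma}\tilde{\mathbf b}_i=\tilde{\mathbf b}_i/\alpha_i$ for all $i$ and $A_{\mathbf B,\gamma}\mathbf y=\mathbf y$ for $\mathbf y\in\{\mathbf b_1,\dots,\mathbf b_n\}^\perp$. *)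

(* Defs.v *)
From HB Require Import structures.
From mathcomp Require Import all_boot all_order all_algebra.
From mathcomp Require Import reals.
Set Implicit Arguments. Unset Strict Implicit. Unset Printing Implicit Defensive.
Import Order.TTheory GRing.Theory Num.Theory.
Local Open Scope ring_scope.

Section Defs.
Variables (R : realType) (d n : nat).

Definition dotv (u v : 'cV[R]_d) : R := (u^T *m v) 0 0.
Definition normv (v : 'cV[R]_d) : R := Num.sqrt (dotv v v).

(* i-th column (0-based) of M, and 0 if i >= n *)
Definition colv (M : 'M[R]_(d, n)) (i : nat) : 'cV[R]_d :=
  match @insub _ (fun k => k < n)%N 'I_n i with Some j => col j M | None => 0 end.

(* list of the first k Gram-Schmidt vectors of the columns of M:
   the new vector is b_k minus its orthogonal projection onto the span of the
   previous Gram-Schmidt vectors (zero vectors contribute nothing since x/0 = 0) *)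
Fixpoint gs_seq (M : 'M[R]_(d, n)) (k : nat) : seq 'cV[R]_d :=
  match k with
  | 0 => [::]
  | k'.+1 =>
    let s := gs_seq M k' in
    rcons s (colv M k' - \sum_(u <- s) (dotv (colv M k') u / dotv u u) *: u)
  end.

(* Gram-Schmidt vector \tilde b_{i+1} (0-based index i) *)
Definition gs (M : 'M[R]_(d, n)) (i : nat) : 'cV[R]_d := nth 0 (gs_seq M i.+1) i.

(* alpha_{i+1} (0-based index i):
   alpha_1 = 1, alpha_i = max(alpha_{i-1}, ceil(||~b_i|| / (gamma^i ||b_1||))) *)
Fixpoint alpha (M : 'M[R]_(d, n)) (gamma : R) (i : nat) : int :=
  match i with
  | 0 => 1
  | i'.+1 => Num.max (alpha M gamma i')
               (Num.ceil (normv (gs M i) / (gamma ^+ i.+1 * normv (colv M 0))))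
  end.

Definition is_A_map (M : 'M[R]_(d, n)) (gamma : R) (A : 'M[R]_d) : Prop :=
  (forall i : 'I_n, A *m gs M i = ((alpha M gamma i)%:~R)^-1 *: gs M i) /\
  (forall y : 'cV[R]_d, (forall i : 'I_n, dotv y (col i M) = 0) -> A *m y = y).

End Defs.

(* Main.v *)
Require Import Defs.
From HB Require Import structures.
From mathcomp Require Import all_boot all_order all_algebra.
From mathcomp Require Import reals.
From mathcomp Require Import ring lra.
Import Order.TTheory GRing.Theory Num.Theory.
Local Open Scope ring_scope.

Section GS.
Variables (R : realType) (d n : nat).
Implicit Types (M : 'M[R]_(d, n)) (u v w : 'cV[R]_d).

Lemma dotvE u v : dotv u v = \sum_i u i 0 * v i 0.
Proof. by rewrite /dotv !mxE; apply: eq_bigr => i _; rewrite mxE. Qed.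

Lemma dotvC u v : dotv u v = dotv v u.
Proof. by rewrite !dotvE; apply: eq_bigr => i _; rewrite mulrC. Qed.

Lemma dotvDl u v w : dotv (u + v) w = dotv u w + dotv v w.
Proof. by rewrite !dotvE -big_split; apply: eq_bigr => i _; rewrite mxE mulrDl. Qed.

Lemma dotvZl (c : R) u w : dotv (c *: u) w = c * dotv u w.
Proof. by rewrite !dotvE mulr_sumr; apply: eq_bigr => i _; rewrite mxE mulrA. Qed.

Lemma dotvNl u w : dotv (- u) w = - dotv u w.
Proof. by rewrite -scaleN1r dotvZl mulN1r. Qed.

Lemma dotvBl u v w : dotv (u - v) w = dotv u w - dotv v w.
Proof. by rewrite dotvDl dotvNl. Qed.

Lemma dotv0l w : dotv 0 w = 0.
Proof. by rewrite -(scale0r 0) dotvZl mul0r. Qed.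

Lemma dotv0r w : dotv w 0 = 0.
Proof. by rewrite dotvC dotv0l. Qed.

Lemma dotv_suml (I : Type) (r : seq I) (P : pred I) (F : I -> 'cV[R]_d) w :
  dotv (\sum_(i <- r | P i) F i) w = \sum_(i <- r | P i) dotv (F i) w.
Proof.
elim/big_rec2: _ => [|i y1 y2 _ <-]; first exact: dotv0l.
by rewrite dotvDl.
Qed.

Lemma dotv_ge0 u : 0 <= dotv u u.
Proof. by rewrite dotvE sumr_ge0 // => i _; rewrite -expr2 sqr_ge0. Qed.

Lemma dotv_eq0 u : dotv u u = 0 -> u = 0.
Proof.
rewrite dotvE => /eqP; rewrite psumr_eq0 => [/allP H|i _]; last by rewrite -expr2 sqr_ge0.
apply/matrixP => i j; rewrite (ord1 j) mxE.
by have /(_ (mem_index_enum i))/implyP/(_ isT) := H i; rewrite mulf_eq0 orbb => /eqP.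
Qed.

Lemma normvZ (c : R) u : normv (c *: u) = `|c| * normv u.
Proof.
rewrite /normv dotvZl dotvC dotvZl mulrA -expr2 sqrtrM ?sqr_ge0 //.
by rewrite sqrtr_sqr.
Qed.

Lemma normv_ge0 u : 0 <= normv u.
Proof. exact: sqrtr_ge0. Qed.

Lemma size_gs_seq M k : size (gs_seq M k) = k.
Proof. by elim: k => //= k IH; rewrite size_rcons IH. Qed.

Lemma nth_gs_seq M k i : (i < k)%N -> nth 0 (gs_seq M k) i = gs M i.
Proof.
elim: k => // k IH; rewrite ltnS leq_eqVlt => /orP[/eqP->//|ik].
by rewrite /= nth_rcons size_gs_seq ik IH.
Qed.

Lemma gsE M k : gs M k = colv M k -
  \sum_(j < k) (dotv (colv M k) (gs M j) / dotv (gs M j) (gs M j)) *: gs M j.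
Proof.
rewrite /gs /= nth_rcons size_gs_seq ltnn eqxx; congr (_ - _).
rewrite (big_nth 0) size_gs_seq big_mkord; apply: eq_bigr => j _.
by rewrite nth_gs_seq.
Qed.

Lemma gs0 M : gs M 0 = colv M 0.
Proof. by rewrite gsE big_ord0 subr0. Qed.

Lemma gs_orth M k j : (j < k)%N -> dotv (gs M k) (gs M j) = 0.
Proof.
elim/ltn_ind: k j => k IH j jk.
rewrite {1}gsE dotvBl dotv_suml (bigD1 (Ordinal jk)) //= big1 ?addr0.
  rewrite dotvZl.
  have [/dotv_eq0 g0|nz] := eqVneq (dotv (gs M j) (gs M j)) 0.
    by rewrite g0 !dotv0r mulr0 subr0.
  by rewrite divfK // subrr.
move=> l /negbTE lj; rewrite dotvZl.
have [lt|gt] := ltnP l j.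
  by rewrite (dotvC (gs M l)) (IH j jk) ?mulr0.
rewrite leq_eqVlt in gt; case/orP: gt => [/eqP E|gt].
  by have := lj; rewrite -(inj_eq val_inj) /= E eqxx.
by rewrite (IH l (ltn_ord l) j gt) mulr0.
Qed.


Lemma dotvZr (c : R) u w : dotv u (c *: w) = c * dotv u w.
Proof. by rewrite dotvC dotvZl dotvC. Qed.

Lemma colvE M k : colv M k = gs M k +
  \sum_(j < k) (dotv (colv M k) (gs M j) / dotv (gs M j) (gs M j)) *: gs M j.
Proof. by rewrite gsE subrK. Qed.

Lemma dotv_sum_gs M k (f : nat -> R) j : (j < k)%N ->
  dotv (\sum_(l < k) f l *: gs M l) (gs M j) = f j * dotv (gs M j) (gs M j).
Proof.
move=> jk; rewrite dotv_suml (bigD1 (Ordinal jk)) //= big1 ?addr0 ?dotvZl //.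
move=> l /negbTE lj; rewrite dotvZl.
have [lt|gt] := ltnP l j.
  by rewrite (dotvC (gs M l)) (gs_orth M j l lt) mulr0.
rewrite leq_eqVlt in gt; case/orP: gt => [/eqP E|gt].
  by have := lj; rewrite -(inj_eq val_inj) /= E eqxx.
by rewrite (gs_orth M l j gt) mulr0.
Qed.

Lemma colv_mul (A : 'M[R]_d) M k : (k < n)%N -> colv (A *m M) k = A *m colv M k.
Proof. by move=> kn; rewrite /colv insubT /= !colE mulmxA. Qed.

Lemma alpha_ge1 M g i : 1 <= alpha M g i.
Proof. by elim: i => //= i IH; rewrite le_max IH. Qed.

Lemma gsA M g A : is_A_map M g A -> forall k, (k < n)%N ->
  gs (A *m M) k = ((alpha M g k)%:~R)^-1 *: gs M k.
Proof.
move=> [HA _].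
set a := fun j => ((alpha M g j)%:~R : R)^-1.
have Aj : forall j, (j < n)%N -> A *m gs M j = a j *: gs M j.
  by move=> j jn; exact: (HA (Ordinal jn)).
have anz : forall j, a j != 0.
  move=> j; rewrite invr_eq0 intr_eq0; apply: contraTneq (alpha_ge1 M g j) => ->.
  by [].
elim/ltn_ind => k IH kn.
set c := fun j => dotv (colv M k) (gs M j) / dotv (gs M j) (gs M j).
have eb : colv (A *m M) k = a k *: gs M k + \sum_(j < k) (c j * a j) *: gs M j.
  rewrite colv_mul // {1}colvE mulmxDr Aj //; congr (_ + _).
  rewrite mulmx_sumr; apply: eq_bigr => j _.
  by rewrite -scalemxAr Aj ?(ltn_trans (ltn_ord j)) // scalerA.
rewrite gsE.
have -> : \sum_(j < k) (dotv (colv (A *m M) k) (gs (A *m M) j) /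
      dotv (gs (A *m M) j) (gs (A *m M) j)) *: gs (A *m M) j =
    \sum_(j < k) (c j * a j) *: gs M j.
  apply: eq_bigr => j _.
  have jn : (j < n)%N by rewrite (ltn_trans (ltn_ord j)).
  rewrite IH // eb !dotvZr !dotvZl dotvDl dotvZl (gs_orth M k j (ltn_ord j)) mulr0 add0r.
  rewrite (dotv_sum_gs M k (fun l => c l * a l) j (ltn_ord j)) scalerA -/(a j).
  have [/dotv_eq0 g0|nz] := eqVneq (dotv (gs M j) (gs M j)) 0.
    by rewrite g0 !scaler0.
  congr (_ *: _); move: (anz j) nz; set x := a j; set D := dotv _ _ => xn Dn.
  by field; rewrite xn Dn.
by rewrite eb addrK.
Qed.

End GS.
Arguments gsA {R d n M g A}.
Arguments alpha_ge1 {R d n}.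
Arguments normvZ {R d}.
Arguments gs0 {R d n}.
Arguments normv_ge0 {R d}.

Lemma F1lem (R : realType) (d n : nat) (M : 'M[R]_(d, n)) (g : R) i :
  2 <= g -> 0 < normv (colv M 0) ->
  normv (gs M i) <= (alpha M g i)%:~R * (g ^+ i.+1 * normv (colv M 0)).
Proof.
move=> g2 Npos; have g0 : 0 < g by apply: lt_le_trans g2.
set N := normv (colv M 0).
case: i => [|i].
  rewrite gs0 -/N /= mul1r expr1.
  have N0 := normv_ge0 (colv M 0); rewrite -/N in N0; nra.
have : (Num.ceil (normv (gs M i.+1) / (g ^+ i.+2 * N)))%:~R <= ((alpha M g i.+1)%:~R : R).
  by rewrite ler_int /= le_max lexx orbT.
move/(le_trans (ceil_ge _)); rewrite ler_pdivrMr //.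
by rewrite mulr_gt0 // exprn_gt0.
Qed.

Lemma main_gen (R : realType) (d n : nat) (M : 'M[R]_(d, n)) (g : R) (A : 'M[R]_d) :
  2 <= g -> is_A_map M g A ->
  (forall i : nat, (i.+1 < n)%N -> alpha M g i <= alpha M g i.+1) /\
  (forall i : nat, (i.+1 < n)%N -> alpha M g i < alpha M g i.+1 ->
     g / 2 * normv (gs (A *m M) i) < normv (gs (A *m M) i.+1)).
Proof.
move=> g2 HA; split=> [i _|i iSn hlt]; first by rewrite /= le_max lexx.
have in_ : (i < n)%N by apply: ltn_trans iSn.
rewrite (gsA HA i in_) (gsA HA i.+1 iSn) !normvZ.
set N := normv (colv M 0).
have g0 : 0 < g by apply: lt_le_trans g2.
have a1 := alpha_ge1 M g i.
have Npos : 0 < N.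
  rewrite lt_def normv_ge0 andbT; apply/eqP => N0.
  move: hlt; rewrite /= -/N N0 mulr0 invr0 mulr0 ceil0.
  by rewrite (_ : Num.max _ _ = alpha M g i) ?ltxx // max_l // (le_trans _ a1).
set ai := alpha M g i; set C := alpha M g i.+1.
have aiR : (1 : R) <= ai%:~R by rewrite ler1z.
have Cgt : (ai < C)%R by [].
have C2 : (2 : R) <= C%:~R.
  have : (2 : int) <= C by apply: le_trans (_ : ai + 1 <= C); [rewrite lerD2r | rewrite lezD1].
  by rewrite -(ler_int R).
set Q := g ^+ i.+1 * N.
have Qpos : 0 < Q by rewrite mulr_gt0 // exprn_gt0.
have F1 : normv (gs M i) <= ai%:~R * Q by exact: F1lem.
set P := g ^+ i.+2 * N.
have PQ : P = g * Q by rewrite /P /Q exprS mulrA.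
have Ppos : 0 < P by rewrite PQ mulr_gt0.
set y := normv (gs M i.+1) / P.
have CE : C = Num.ceil y.
  move: hlt; rewrite /C /= -/ai -/P -/y; case: (leP ai (Num.ceil y)) => h.
    by [].
  by rewrite ltxx.
have F2 : (C - 1)%:~R < y by rewrite CE ceilB1_lt.
have vE : normv (gs M i.+1) = y * P by rewrite /y divfK // gt_eqF.
rewrite vE; move: F2; rewrite intrB => F2.
have aipos : 0 < (ai%:~R : R) by apply: lt_le_trans aiR.
have Cpos : 0 < (C%:~R : R) by apply: lt_le_trans C2.
rewrite !gtr0_norm ?invr_gt0 //.
have L : (ai%:~R)^-1 * normv (gs M i) <= Q.
  by rewrite ler_pdivrMl.
have -> : C%:~R^-1 * (y * P) = (y * P) / C%:~R by rewrite mulrC.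
rewrite ltr_pdivlMr //.
have u0 := normv_ge0 (gs M i).
move: L; set u := (_ * normv _) => L.
rewrite PQ in F2 *; rewrite (_ : 1%:~R = 1 :> R) // in F2.
move: C2 Cpos F2; set c := (C%:~R : R) => C2' Cpos' F2'.
have h1 : 0 <= g * c * (Q - u) by rewrite !mulr_ge0 ?subr_ge0 // ltW.
have h2 : 0 < g * Q * (y - (c - 1)) by apply: mulr_gt0; [exact: mulr_gt0 | rewrite subr_gt0].
have h3 : 0 <= g * Q * (c - 2) by apply: mulr_ge0; [apply: mulr_ge0; apply: ltW | rewrite subr_ge0].
nra.
Qed.

Theorem mainTheorem12 (R : realType) (d n : nat) (B : 'M[rat]_(d, n))
    (gamma : R) (A : 'M[R]_d) :
  \rank B = n ->
  2 <= gamma ->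
  is_A_map (map_mx ratr B) gamma A ->
  (forall i : nat, (i.+1 < n)%N ->
     alpha (map_mx ratr B) gamma i <= alpha (map_mx ratr B) gamma i.+1) /\
  (forall i : nat, (i.+1 < n)%N ->
     alpha (map_mx ratr B) gamma i < alpha (map_mx ratr B) gamma i.+1 ->
     gamma / 2 * normv (gs (A *m map_mx ratr B) i)
       < normv (gs (A *m map_mx ratr B) i.+1)).
Proof.
move=> _ g2 HA; exact: main_gen g2 HA.
Qed.
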